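(* Let $G$ be an odd unicyclic graph on $n$ vertices $1,\ldots,n$ and edges $e_1,\ldots,e_n$ with cycle $C$. For distinct edges $e_i,e_j$ and a vertex $k$: (a) if $e_i,e_j\in C$ and $k\in G\setminus\{e_i,e_j\}[P_{e_i-e_j}]$, then $d(e_i,k)+d(e_j,k)$ and $d(e_i,e_j)$ have the same parity; (b) if $e_i,e_j\in C$ and $k\notin G\setminus\{e_i,e_j\}[P_{e_i-e_j}]$, then $d(e_i,k)+d(e_j,k)$ and $d(e_i,e_j)$ have different parity; (c) if $e_i,e_j\notin C$ and $k\in (G\setminus e_i(C))\cap(G\setminus e_j(C))$, then $d(e_i,k)+d(e_j,k)$ and $d(e_i,e_j)$ have different parity; (d) if $e_i\in C$, $e_j\notin C$ and $k\notin G\setminus e_j[C]$, then $d(e_i,k)+d(e_j,k)$ and $d(e_i,e_j)$ have different parity.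
   Context: A unicyclic graph on $n$ vertices is a simple connected graph with $n$ edges; it is odd if its unique cycle $C$ has odd length. $d$ is graph distance; for vertex $k$ and edge $e=\{l,m\}$, $d(e,k):=\min\{d(k,l),d(k,m)\}$, and for edges $d(e_i,e_j):=\min\{d(l_i,e_j),d(m_i,e_j)\}$ where $e_i=\{l_i,m_i\}$. For an edge $e$ not on $C$, $G\setminus e[C]$ is the component of $G\setminus e$ containing $C$ and $G\setminus e(C)$ the other component. For distinct edges $e_i,e_j$ on $C$, $P_{e_i-e_j}$ is the shortest path between endpoints of $e_i$ and of $e_j$, and $G\setminus\{e_i,e_j\}[P_{e_i-e_j}]$ is the component of $G\setminus\{e_i,e_j\}$ containing $P_{e_i-e_j}$. *)

(* Defs.v *)
From mathcomp Require Import all_boot.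
Set Implicit Arguments. Unset Strict Implicit. Unset Printing Implicit Defensive.

(* A simple graph on a finite vertex type T is a symmetric irreflexive
   relation g : rel T. *)

Definition edges (T : finType) (g : rel T) : {set {set T}} :=
  [set [set p.1; p.2] | p in [pred p : T * T | g p.1 p.2]].

Definition unicyclic (T : finType) (g : rel T) : Prop :=
  [/\ symmetric g, irreflexive g, (forall x y, connect g x y)
    & #|edges g| = #|T|].

Definition is_cycle (T : finType) (g : rel T) (c : seq T) : bool :=
  [&& uniq c, cycle g c & 2 < size c].

Definition on_cycle (T : finType) (c : seq T) (l m : T) : bool :=
  (l \in c) && ((next c l == m) || (prev c l == m)).

(* Graph distance: least length of a walk from x to y (walks of length
   < #|T| suffice in a connected graph; returns #|T| if y unreachable). *)
Definition dist (T : finType) (g : rel T) (x y : T) : nat :=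
  find (fun k => [exists p : k.-tuple T, path g x p && (last x p == y)])
       (iota 0 #|T|).

Definition dist_ev (T : finType) (g : rel T) (l m k : T) : nat :=
  minn (dist g k l) (dist g k m).

Definition dist_ee (T : finType) (g : rel T) (li mi lj mj : T) : nat :=
  minn (dist_ev g lj mj li) (dist_ev g lj mj mi).

Definition del_edge (T : finType) (g : rel T) (l m : T) : rel T :=
  [rel x y | g x y && ([set x; y] != [set l; m])].

Definition in_comp (T : finType) (h : rel T) (s : seq T) (k : T) : bool :=
  has (fun w => connect h w k) s.

(* Main.v *)
Require Import Defs.
From mathcomp Require Import all_boot zify.
Set Implicit Arguments. Unset Strict Implicit. Unset Printing Implicit Defensive.

Lemma dist_le (T : finType) (g : rel T) x p :
  path g x p -> dist g x (last x p) <= size p.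
Proof.
move=> hp; rewrite /dist.
case: (ltnP (size p) #|T|) => hs; last first.
  by apply: leq_trans (find_size _ _) _; rewrite size_iota.
rewrite leqNgt; apply/negP => /(before_find 0).
rewrite nth_iota // add0n => /existsP; apply.
by exists (in_tuple p); rewrite /= hp eqxx.
Qed.

Lemma dist_path (T : finType) (g : rel T) x y :
  connect g x y -> exists p, [/\ path g x p, last x p = y & size p = dist g x y].
Proof.
move=> /connectP [p hp ->].
case: (shortenP hp) => p' hp' hu _.
set a := (fun k => [exists p : k.-tuple T, path g x p && (last x p == last x p')]).
have ha : has a (iota 0 #|T|).
  apply/hasP; exists (size p').
    rewrite mem_iota /= add0n.
    by move: (card_uniqP hu) (max_card (mem (x :: p'))) => /= -> .
  by apply/existsP; exists (in_tuple p'); rewrite /= hp' eqxx.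
have := nth_find 0 ha; have hf := ha; rewrite has_find size_iota in hf.
rewrite nth_iota //.
rewrite add0n => /existsP [t /andP [ht /eqP hl]].
by exists t; rewrite size_tuple.
Qed.

Definition conn (T : finType) (g : rel T) := forall x y, connect g x y.

Lemma dist_tri (T : finType) (g : rel T) x y z :
  connect g x y -> connect g y z -> dist g x z <= dist g x y + dist g y z.
Proof.
move=> /dist_path [p [hp hl <-]] /dist_path [q [hq hl' <-]].
subst y z; have := dist_le (x := x) (p := p ++ q) (g := g).
by rewrite cat_path hp hq last_cat size_cat; apply.
Qed.

Lemma dist_sym_le (T : finType) (g : rel T) x y :
  symmetric g -> connect g x y -> dist g y x <= dist g x y.
Proof.
move=> hs /dist_path [p [hp hl <-]].
have hp' : path g (last x p) (rev (belast x p)).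
  rewrite rev_path; apply: sub_path hp => a b /=; by rewrite hs.
move: (dist_le hp').
have -> : last (last x p) (rev (belast x p)) = x.
  have e : last x p :: rev (belast x p) = rev (x :: p) by rewrite [x :: p]lastI rev_rcons.
  by rewrite -[last (last x p) _]/(last x (last x p :: rev (belast x p))) e rev_cons last_rcons.
by rewrite size_rev size_belast hl.
Qed.

Lemma dist_sym (T : finType) (g : rel T) x y :
  symmetric g -> conn g -> dist g x y = dist g y x.
Proof. by move=> hs hc; apply/eqP; rewrite eqn_leq !dist_sym_le. Qed.

Lemma dist0 (T : finType) (g : rel T) x : dist g x x = 0.
Proof. by apply/eqP; rewrite -leqn0; apply: (dist_le (p := [::])). Qed.

Lemma dist1 (T : finType) (g : rel T) x y : g x y -> dist g x y <= 1.
Proof. by move=> h; apply: (dist_le (p := [:: y])); rewrite /= h. Qed.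

Lemma dist_le' (T : finType) (g : rel T) x p y :
  path g x p -> last x p = y -> dist g x y <= size p.
Proof. by move=> hp <-; apply: dist_le. Qed.

Lemma cross (T : Type) (g : rel T) (S : pred T) x p :
  path g x p -> S x -> ~~ S (last x p) ->
  exists p1 z p2, [/\ p = p1 ++ z :: p2, all S (x :: p1) & ~~ S z].
Proof.
elim: p x => [|y p IH] x /=; first by move=> _ ->.
move=> /andP [hxy hp] hx hl.
case hy: (S y).
  have [p1 [z [p2 [e ha hz]]]] := IH y hp hy hl.
  by exists (y :: p1), z, p2; rewrite e /= hx.
by exists [::], y, p; rewrite /= hx hy.
Qed.

Lemma badstep (T : Type) (g h : rel T) x q :
  path g x q -> ~~ path h x q ->
  exists q1 z q2, q = q1 ++ z :: q2 /\ ~~ h (last x q1) z.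
Proof.
elim: q x => [|y q IH] x //=.
move=> /andP [hxy hp]; case hh: (h x y) => /= hn.
  have [q1 [z [q2 [e hb]]]] := IH y hp hn.
  by exists (y :: q1), z, q2; rewrite e.
by exists [::], y, q; rewrite hh.
Qed.

Lemma set2_eq (T : finType) (a b c d : T) :
  [set a; b] = [set c; d] -> (a = c /\ b = d) \/ (a = d /\ b = c).
Proof.
move=> e.
have ha : a \in [set c; d] by rewrite -e set21.
have hb : b \in [set c; d] by rewrite -e set22.
have hc : c \in [set a; b] by rewrite e set21.
have hd : d \in [set a; b] by rewrite e set22.
move: ha hb hc hd => /set2P [] -> /set2P [] -> /set2P [] ? /set2P [] ?;
  subst; auto.
Qed.

Lemma del_edgeE (T : finType) (g : rel T) l m x y :
  del_edge g l m x y = g x y && ([set x; y] != [set l; m]).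
Proof. by []. Qed.

Lemma not_del (T : finType) (g : rel T) l m x y :
  g x y -> ~~ del_edge g l m x y -> [set x; y] = [set l; m].
Proof. by rewrite del_edgeE => -> /= /negPn /eqP. Qed.

Lemma del_sym (T : finType) (g : rel T) l m :
  symmetric g -> symmetric (del_edge g l m).
Proof. by move=> hs x y; rewrite !del_edgeE hs setUC. Qed.

Lemma del_sub (T : finType) (g : rel T) l m x y : del_edge g l m x y -> g x y.
Proof. by rewrite del_edgeE => /andP []. Qed.


Lemma bridge (T : finType) (g : rel T) (A : pred T) a b x y :
  symmetric g -> conn g -> g a b ->
  (forall u w, del_edge g a b u w -> A u = A w) ->
  A a -> ~~ A b -> A x -> ~~ A y ->
  dist g y x = dist g y b + 1 + dist g a x.
Proof.
move=> hs hc hab hcl ha hb hx hy; apply/eqP; rewrite eqn_leq; apply/andP; split.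
  apply: leq_trans (dist_tri (y := b) (hc _ _) (hc _ _)) _; rewrite -addnA leq_add2l.
  apply: leq_trans (dist_tri (y := a) (hc _ _) (hc _ _)) _; rewrite leq_add2r.
  by apply: dist1; rewrite hs.
have [p [hp hl <-]] := dist_path (hc y x).
have hl2 : ~~ (predC A) (last y p) by rewrite /= hl hx.
have [p1 [z [p2 [e hall hz]]]] := cross (S := predC A) hp hy hl2.
move: hp hl; rewrite e cat_path last_cat /= => /andP [hp1 /andP [hwz hp2]] hl.
set w := last y p1 in hwz.
have hw : ~~ A w by have := allP hall w (mem_last _ _).
have hnd : ~~ del_edge g a b w z.
  have hz' : A z by move: hz; rewrite /= negbK.
  by apply/negP => /hcl hh; move: hw; rewrite hh hz'.
have [[ew ez]|[ew ez]] := set2_eq (not_del hwz hnd).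
  by move: hw; rewrite ew ha.
rewrite size_cat /= addn1 addSn -addSnnS.
apply: leq_add; first by rewrite -ew; apply: dist_le hp1.
by rewrite -ez -hl; apply: dist_le.
Qed.

Lemma comp_closed (T : finType) (h : rel T) (s : seq T) u w :
  symmetric h -> h u w -> in_comp h s u = in_comp h s w.
Proof.
move=> hs huw; apply: eq_has => v /=; apply/idP/idP => H.
  by apply: connect_trans H (connect1 _).
by apply: connect_trans H (connect1 _); rewrite hs.
Qed.

Lemma in_comp_mem (T : finType) (h : rel T) (s : seq T) u :
  u \in s -> in_comp h s u.
Proof. by move=> hu; apply/hasP; exists u. Qed.

Lemma orient (T : finType) (g : rel T) (c : seq T) l m k c0 :
  symmetric g -> conn g -> c0 \in c ->
  ~~ in_comp (del_edge g l m) c k ->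
  exists a b p, [/\ [set l; m] = [set a; b], g a b,
    in_comp (del_edge g l m) c a & ~~ in_comp (del_edge g l m) c b] /\
    [/\ path g k p, last k p = b & all (predC (in_comp (del_edge g l m) c)) (k :: p)].
Proof.
move=> hs hc hc0 hk.
set A := in_comp (del_edge g l m) c.
have [p [hp hl _]] := dist_path (hc k c0).
have hl2 : ~~ (predC A) (last k p) by rewrite /= hl negbK; apply: in_comp_mem.
have [p1 [z [p2 [e hall hz]]]] := cross (S := predC A) hp hk hl2.
move: hp; rewrite e cat_path /= => /andP [hp1 /andP [hwz _]].
set w := last k p1 in hwz.
have hw : ~~ A w by have := allP hall w (mem_last _ _).
have hz' : A z by move: hz; rewrite /= negbK.
have hnd : ~~ del_edge g l m w z.
  apply/negP => hh; have E := comp_closed c (del_sym l m hs) hh; move: hw; rewrite -/A in E; by rewrite E hz'.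
exists z, w, p1; split; split => //; last by rewrite hs.
by rewrite -(not_del hwz hnd) setUC.
Qed.

Lemma ev_set (T : finType) (g : rel T) l m a b k :
  [set l; m] = [set a; b] -> dist_ev g l m k = dist_ev g a b k.
Proof. by rewrite /dist_ev => /set2_eq [[-> ->]|[-> ->]] //; rewrite minnC. Qed.

Lemma del_set (T : finType) (g : rel T) l m a b u w :
  [set l; m] = [set a; b] -> del_edge g l m u w = del_edge g a b u w.
Proof. by rewrite !del_edgeE => ->. Qed.

Lemma odd_aux x y : odd (x + 1 + y + x) = ~~ odd y.
Proof. by rewrite !oddD; case: (odd x); case: (odd y). Qed.

Lemma part_d (T : finType) (g : rel T) (c : seq T) li mi lj mj k :
  symmetric g -> conn g -> li \in c -> mi \in c ->
  ~~ in_comp (del_edge g lj mj) c k ->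
  odd (dist_ev g li mi k + dist_ev g lj mj k) != odd (dist_ee g li mi lj mj).
Proof.
move=> hs hc hli hmi hk.
have [a [b [_ [[e hab ha hb] _]]]] := orient hs hc hli hk.
set A := in_comp (del_edge g lj mj) c in ha hb hk.
have hcl : forall u w, del_edge g a b u w -> A u = A w.
  by move=> u w; rewrite -(del_set _ _ _ e) => /(comp_closed c (del_sym _ _ hs)).
have hAli : A li by apply: in_comp_mem.
have hAmi : A mi by apply: in_comp_mem.
rewrite /dist_ee !(ev_set _ _ e) /dist_ev.
have B := bridge hs hc hab hcl ha hb.
rewrite (B _ _ ha hk) dist0 addn0 (minn_idPr (leq_addr _ _)).
rewrite (B _ _ hAli hk) (B _ _ hAmi hk) -!addnA -addn_minr.
rewrite (dist_sym li b hs hc) (dist_sym mi b hs hc) (B _ _ hAli hb) (B _ _ hAmi hb).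
rewrite dist0 !add0n (dist_sym li a hs hc) (dist_sym mi a hs hc).
rewrite (minn_idPl (leq_addl _ _)) (minn_idPl (leq_addl _ _)).
by rewrite -addn_minr addnA odd_aux; case: odd.
Qed.

Lemma minn_set (T : finType) (f : T -> nat) l m a b :
  [set l; m] = [set a; b] -> minn (f l) (f m) = minn (f a) (f b).
Proof. by move=> /set2_eq [[-> ->]|[-> ->]] //; rewrite minnC. Qed.

Lemma ee_sym (T : finType) (g : rel T) li mi lj mj :
  symmetric g -> conn g -> dist_ee g li mi lj mj = dist_ee g lj mj li mi.
Proof.
move=> hs hc; rewrite /dist_ee /dist_ev.
rewrite (dist_sym li lj hs hc) (dist_sym li mj hs hc) (dist_sym mi lj hs hc)
  (dist_sym mi mj hs hc).
by rewrite -!minnA (minnCA (dist g lj mi)).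
Qed.

Lemma path_closed (T : Type) (h : rel T) (A : pred T) x p :
  (forall u w, h u w -> A u = A w) -> path h x p -> A x -> all A (x :: p).
Proof.
move=> hcl; elim: p x => [|y p IH] x /=; first by move=> _ ->.
move=> /andP [hxy hp] hx; rewrite hx /=; apply: IH hp _.
by rewrite -(hcl _ _ hxy).
Qed.

Lemma either (T : finType) (g : rel T) (c : seq T) li mi lj mj ai bi aj bj :
  symmetric g -> conn g -> [set li; mi] != [set lj; mj] ->
  [set li; mi] = [set ai; bi] -> g ai bi -> in_comp (del_edge g li mi) c ai ->
  [set lj; mj] = [set aj; bj] -> in_comp (del_edge g lj mj) c aj ->
  ~~ in_comp (del_edge g lj mj) c bj ->
  ~~ in_comp (del_edge g lj mj) c bi -> in_comp (del_edge g li mi) c bj.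
Proof.
move=> hs hc hneq ei gi hai ej haj hbj hbij.
set Ai := in_comp (del_edge g li mi) c in hai *.
set Aj := in_comp (del_edge g lj mj) c in haj hbj hbij.
have hcli := comp_closed c (del_sym li mi hs).
have hclj := comp_closed c (del_sym lj mj hs).
have [w hw /connectP [R hR hlR]] : exists2 w, w \in c & connect (del_edge g li mi) ai w.
  move: hai => /hasP [w hw hcw]; exists w => //.
  by rewrite (sym_connect_sym (del_sym li mi hs)).
have hp : path g bi (ai :: R) by rewrite /= hs gi /=; apply: sub_path hR => u v /del_sub.
have hl2 : ~~ (predC Aj) (last bi (ai :: R)) by rewrite /= -hlR negbK; apply: in_comp_mem.
have [p1 [z [p2 [e hall hz]]]] := cross (S := predC Aj) hp hbij hl2.
have hp' := hp; move: hp'; rewrite e cat_path /= => /andP [hp1 /andP [hwz _]].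
set w' := last bi p1 in hwz.
have hw' : ~~ Aj w' by have := allP hall w' (mem_last _ _).
have hz' : Aj z by move: hz; rewrite /= negbK.
have hnd : ~~ del_edge g lj mj w' z.
  by apply/negP => hh; move: hw'; rewrite /Aj (hclj _ _ hh); move: hz'; rewrite /Aj => ->.
have [[ew ez]|[ew ez]] := set2_eq (etrans (not_del hwz hnd) ej).
  by move: hw'; rewrite ew haj.
move: e hall hp1 hwz hw' hnd ew; rewrite /w'; clear w'.
case: p1 => [|y p1] /= e _ _ hwz hw' hnd ew.
  case: e => e1 e2; move/negP: hneq; case.
  by rewrite ei ej -ew -ez e1 setUC.
case: e => ey eR.
have := path_closed hcli hR hai.
move=> /allP; apply; rewrite -ew -ey eR.
have : last y p1 \in y :: p1 by apply: mem_last.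
by rewrite ey -cat_cons mem_cat => ->.
Qed.

Lemma minn_aux X : minn (minn (X+1) (X+2)) (minn X X.+1) = X.
Proof. lia. Qed.

Lemma case1 (T : finType) (g : rel T) (c : seq T) li mi lj mj k ai bi aj bj pi :
  symmetric g -> conn g ->
  [set li; mi] = [set ai; bi] -> g ai bi -> in_comp (del_edge g li mi) c ai ->
  ~~ in_comp (del_edge g li mi) c bi ->
  path g k pi -> last k pi = bi -> all (predC (in_comp (del_edge g li mi) c)) (k :: pi) ->
  [set lj; mj] = [set aj; bj] -> g aj bj -> in_comp (del_edge g lj mj) c aj ->
  ~~ in_comp (del_edge g lj mj) c bj -> ~~ in_comp (del_edge g lj mj) c k ->
  in_comp (del_edge g lj mj) c bi ->
  odd (dist_ev g li mi k + dist_ev g lj mj k) != odd (dist_ee g li mi lj mj).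
Proof.
move=> hs hc ei gi hai hbi hpi hli hall ej gj haj hbj hkj hbij.
set Ai := in_comp (del_edge g li mi) c in hai hbi hall.
set Aj := in_comp (del_edge g lj mj) c in haj hbj hkj hbij.
have hcli : forall u w, del_edge g ai bi u w -> Ai u = Ai w.
  by move=> u w; rewrite -(del_set _ _ _ ei) => /(comp_closed c (del_sym _ _ hs)).
have hclj : forall u w, del_edge g aj bj u w -> Aj u = Aj w.
  by move=> u w; rewrite -(del_set _ _ _ ej) => /(comp_closed c (del_sym _ _ hs)).
have hki : ~~ Ai k by have := allP hall k (mem_head _ _).
have hl2 : ~~ (predC Aj) (last k pi) by rewrite /= hli negbK.
have [q1 [z [q2 [e hall2 hz]]]] := cross (S := predC Aj) hpi hkj hl2.
have hp' := hpi; move: hp'; rewrite e cat_path /= => /andP [_ /andP [hwz _]].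
have hw : ~~ Aj (last k q1) by have := allP hall2 _ (mem_last _ _).
have hz' : Aj z by move: hz; rewrite /= negbK.
have hnd : ~~ del_edge g aj bj (last k q1) z.
  by apply/negP => hh; move: hw; rewrite (hclj _ _ hh) hz'.
have [[ew ez]|[ew ez]] := set2_eq (not_del hwz hnd).
  by move: hw; rewrite ew haj.
have hbj' : ~~ Ai bj.
  apply: (allP hall); rewrite -ew e -cat_cons mem_cat.
  by rewrite (mem_last k q1).
have haj' : ~~ Ai aj.
  apply: (allP hall); rewrite -ez e inE mem_cat inE eqxx /=.
  by rewrite !orbT.
have Bi := bridge hs hc gi hcli hai hbi.
have Bj := bridge hs hc gj hclj haj hbj.
set X := dist g aj bi.
have e1 : dist g ai aj = X + 1.
  by rewrite (dist_sym ai aj hs hc) (Bi _ _ hai haj') dist0 addn0.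
have e2 : dist g bj bi = X.+1.
  by rewrite (Bj _ _ hbij hbj) dist0 add0n add1n.
have e3 : dist g ai bj = X + 2.
  by rewrite (dist_sym ai bj hs hc) (Bi _ _ hai hbj') dist0 addn0 e2 addn1 addn2.
have e4 : dist g bi aj = X by rewrite (dist_sym bi aj hs hc).
have e5 : dist g bi bj = X.+1 by rewrite (dist_sym bi bj hs hc).
have e7 : dist_ev g lj mj k = dist g k bj.
  rewrite (ev_set _ _ ej) /dist_ev (Bj _ _ haj hkj) dist0 addn0.
  by apply/minn_idPr; rewrite leq_addr.
have e6 : dist_ev g li mi k = dist g k bj + 1 + X.
  rewrite (ev_set _ _ ei) /dist_ev (Bi _ _ hai hki) dist0 addn0.
  rewrite (minn_idPr (leq_addr _ _)).
  by rewrite (Bj _ _ hbij hkj).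
have e8 : dist_ee g li mi lj mj = X.
  rewrite /dist_ee (minn_set (dist_ev g lj mj) ei) !(ev_set _ _ ej) /dist_ev.
  by rewrite e1 e3 e4 e5 minn_aux.
by rewrite e6 e7 e8 odd_aux; case: odd.
Qed.

Lemma part_c (T : finType) (g : rel T) (c : seq T) li mi lj mj k c0 :
  symmetric g -> conn g -> c0 \in c -> [set li; mi] != [set lj; mj] ->
  ~~ in_comp (del_edge g li mi) c k -> ~~ in_comp (del_edge g lj mj) c k ->
  odd (dist_ev g li mi k + dist_ev g lj mj k) != odd (dist_ee g li mi lj mj).
Proof.
move=> hs hc hc0 hneq hki hkj.
have [ai [bi [pi [[ei gi hai hbi] [hpi hli halli]]]]] := orient hs hc hc0 hki.
have [aj [bj [pj [[ej gj haj hbj] [hpj hlj hallj]]]]] := orient hs hc hc0 hkj.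
case hbij : (in_comp (del_edge g lj mj) c bi).
  exact: (case1 hs hc ei gi hai hbi hpi hli halli ej gj haj hbj hkj hbij).
have hbji := either hs hc hneq ei gi hai ej haj hbj (negbT hbij).
rewrite addnC ee_sym //.
exact: (case1 hs hc ej gj haj hbj hpj hlj hallj ei gi hai hbi hki hbji).
Qed.

Lemma prev_head (T : eqType) (y : T) s : y \notin s -> prev (y :: s) y = last y s.
Proof.
move=> hy; rewrite prev_nth mem_head /= (memNindex hy).
by rewrite -[X in nth _ _ X]/((size (y :: s)).-1) nth_last.
Qed.

Lemma cyc_next (T : finType) (g : rel T) (c : seq T) x :
  is_cycle g c -> x \in c -> connect (del_edge g x (next c x)) (next c x) x.
Proof.
case/and3P => hu hcy hsz hx.
set y := next c x.
have hy : y \in c by rewrite mem_next.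
have hxy : x = prev c y by rewrite /y prev_next.
case: (rot_to hy) => i s' e.
have hu' : uniq (y :: s') by rewrite -e rot_uniq.
have hcy' : cycle g (y :: s') by rewrite -e rot_cycle.
have hsz' : 2 < size (y :: s') by rewrite -e size_rot.
have hys : y \notin s' by case/andP: hu'.
have hxl : x = last y s' by rewrite hxy -(prev_rot i hu) e prev_head.
move: hu' hcy' hsz' hys; rewrite hxl {hxl hxy}; clear e.
case/lastP: s' => [|s1 z] //=.
rewrite last_rcons rcons_path size_rcons => hu' /andP [hp _] hsz' hys.
move: hp; rewrite rcons_path => /andP [hp1 hlz].
move: hu'; rewrite -cats1 cat_uniq /= orbF andbT => /andP [_ /andP [_ hz1]].
rewrite mem_rcons inE negb_or in hys; case/andP: hys => hyz hys1.
apply/connectP; exists (rcons s1 z); last by rewrite last_rcons.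
rewrite rcons_path; apply/andP; split.
  apply: (sub_in_path (P := predC1 z)) hp1; last first.
    by rewrite /= (negbTE hyz) /=; apply/allP => w hw /=; apply/eqP => ew; move: hz1; rewrite -ew hw.
  move=> u w hu1 hw1 huw; rewrite del_edgeE huw /=; apply/eqP => /set2_eq.
  by move: hu1 hw1; rewrite !inE => /eqP hu2 /eqP hw2 [[]|[]].
have hl1 : last y s1 \in s1 by case: (s1) hsz' => //= a s _; apply: mem_last.
rewrite del_edgeE hlz /=; apply/eqP => /set2_eq [[e1 e2]|[e1 e2]].
  by move: hz1; rewrite -e1 hl1.
by move: hys1; rewrite -e1 hl1.
Qed.

Lemma cyc_conn (T : finType) (g : rel T) (c : seq T) l m :
  symmetric g -> is_cycle g c -> on_cycle c l m -> connect (del_edge g l m) l m.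
Proof.
move=> hs hcy /andP [hl /orP [/eqP hn|/eqP hp]].
  by rewrite (sym_connect_sym (del_sym l m hs)) -hn; apply: cyc_next.
have hu : uniq c by case/and3P: hcy.
have hm : m \in c by rewrite -hp mem_prev.
have hn : next c m = l by rewrite -hp next_prev.
have := cyc_next hcy hm; rewrite hn.
have E : del_edge g m l =2 del_edge g l m by move=> u w; apply: del_set; rewrite setUC.
by rewrite (eq_connect E).
Qed.

Definition par (T : finType) (h : rel T) (r v : T) :=
  odflt v [pick w | h v w && (dist h w r < dist h v r)].

Lemma parP (T : finType) (h : rel T) r v :
  conn h -> v != r -> h v (par h r v) && (dist h (par h r v) r < dist h v r).
Proof.
move=> hc hv; rewrite /par; case: pickP => [w //|H] /=.
have [[|w p] [hp hl hs]] := dist_path (hc v r).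
  by move: hv; rewrite -hl eqxx.
move: hp hl => /= /andP [hvw hp] hl; move: (H w); rewrite hvw /= -hs /=.
by have := dist_le hp; rewrite hl ltnS => ->.
Qed.

Lemma mem_edges (T : finType) (h : rel T) x y : h x y -> [set x; y] \in edges h.
Proof. by move=> hxy; apply/imsetP; exists (x, y). Qed.

Lemma par_inj (T : finType) (h : rel T) r :
  conn h -> {in [set~ r] &, injective (fun v => [set v; par h r v])}.
Proof.
move=> hc u v; rewrite !in_setC1 => hu hv /set2_eq [[]//|[e1 e2]].
have := parP hc hu; have := parP hc hv; rewrite -e1 e2 => /andP [_ h1] /andP [_ h2].
by move: (ltn_trans h1 h2); rewrite ltnn.
Qed.

Lemma par_sub (T : finType) (h : rel T) r :
  conn h -> [set [set v; par h r v] | v in [set~ r]] \subset edges h.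
Proof.
move=> hc; apply/subsetP => E /imsetP [v]; rewrite in_setC1 => hv ->.
by apply: mem_edges; case/andP: (parP hc hv).
Qed.

Lemma count_edges (T : finType) (h : rel T) (r : T) : conn h -> #|T|.-1 <= #|edges h|.
Proof.
move=> hc; have := subset_leq_card (par_sub r hc).
by rewrite card_in_imset ?cardsC1 //; apply: par_inj.
Qed.

Lemma level (T : finType) (h : rel T) r x y :
  conn h -> #|edges h| <= #|T|.-1 -> h x y ->
  odd (dist h x r) != odd (dist h y r).
Proof.
move=> hc hle hxy.
have hsub := par_sub r hc.
have hcard : #|[set [set v; par h r v] | v in [set~ r]]| = #|edges h|.
  apply/eqP; rewrite eqn_leq subset_leq_card // card_in_imset ?cardsC1 //; last exact: par_inj.
have E := elimT (subset_cardP hcard) hsub.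
have := mem_edges hxy; rewrite -E => /imsetP [v hv e].
rewrite in_setC1 in hv; have /andP [hvp hlt] := parP hc hv.
have hle2 : dist h v r <= (dist h (par h r v) r).+1.
  apply: leq_trans (dist_tri (y := par h r v) (hc _ _) (hc _ _)) _.
  by rewrite -add1n leq_add2r dist1.
have hd : dist h v r = (dist h (par h r v) r).+1 by apply/eqP; rewrite eqn_leq hle2 hlt.
case/set2_eq: e => [[-> ->]|[-> ->]]; rewrite hd /=; by case: odd.
Qed.

Lemma edges_del (T : finType) (g : rel T) l m :
  edges (del_edge g l m) = edges g :\ [set l; m].
Proof.
apply/setP => E; rewrite in_setD1; apply/imsetP/andP => [[[x y] /= hxy ->]|[hE /imsetP [[x y] /= hxy eE]]].
  by move: hxy; rewrite ?inE /= ?del_edgeE => /andP [hxy hn]; split => //; apply: mem_edges.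
by exists (x, y) => //; move: hxy; rewrite !inE /= del_edgeE -eE hE => ->.
Qed.

Lemma path_par (T : Type) (h : rel T) (f : T -> bool) x p :
  (forall a b, h a b -> f a != f b) -> path h x p -> f (last x p) = f x (+) odd (size p).
Proof.
move=> hf; elim: p x => [|y p IH] x /=; first by rewrite addbF.
move=> /andP [hxy hp]; rewrite (IH _ hp).
by move: (hf _ _ hxy); case: (f x); case: (f y); case: odd.
Qed.

Lemma cycle_even (T : eqType) (g : rel T) (f : T -> bool) c :
  (forall a b, g a b -> f a != f b) -> cycle g c -> ~~ odd (size c).
Proof.
move=> hf; case: c => [|x s] //= hp; have := path_par hf hp.
rewrite last_rcons size_rcons /=; by case: (f x); case: (odd (size s)).
Qed.

Lemma conn_del (T : finType) (g : rel T) l m :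
  symmetric g -> conn g -> connect (del_edge g l m) l m -> conn (del_edge g l m).
Proof.
move=> hs hc hlm x y; apply: (connect_sub _ (hc x y)) => a b hab.
case hd : (del_edge g l m a b); first exact: connect1.
have /set2_eq [[-> ->]|[-> ->]] := not_del hab (negbT hd) => //.
by rewrite (sym_connect_sym (del_sym l m hs)).
Qed.

Lemma Dij_le (T : finType) (g : rel T) li mi lj mj x y :
  x \in [set li; mi] -> y \in [set lj; mj] -> dist_ee g li mi lj mj <= dist g x y.
Proof.
rewrite /dist_ee /dist_ev => /set2P [] -> /set2P [] ->;
  lia.
Qed.

Lemma near (T : finType) (g : rel T) (f : T -> bool) a b k :
  conn g -> (forall x y, del_edge g a b x y -> f x != f y) -> f a = f b ->
  odd (dist_ev g a b k) = f k (+) f a.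
Proof.
move=> hc hf hab.
set w := if dist g k a <= dist g k b then a else b.
have hw : dist g k w = dist_ev g a b k.
  by rewrite /w /dist_ev; case: leqP.
have fw : f w = f a by rewrite /w; case: leqP.
have [q [hq hl hs]] := dist_path (hc k w).
have hq' : path (del_edge g a b) k q.
  apply/negPn/negP => /(badstep hq) [q1 [z [q2 [e hn]]]].
  move: hq; rewrite e cat_path /= => /andP [hq1 /andP [hwz _]].
  have /set2_eq hset := not_del hwz hn.
  have hlt : size q1 < dist_ev g a b k by rewrite -hw -hs e size_cat /= addnS ltnS leq_addr.
  have : dist g k (last k q1) <= size q1 := dist_le hq1.
  have : dist_ev g a b k <= dist g k (last k q1).
    by rewrite /dist_ev; case: hset => [[-> _]|[-> _]]; rewrite ?geq_minl ?geq_minr.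
  move=> h1 h2; have := leq_trans h1 h2; by rewrite leqNgt hlt.
have := path_par hf hq'; rewrite hl fw hs hw => ->.
by case: (f k); case: (f a); case: (odd _).
Qed.

Lemma no_le1 a b : a + b.+1 <= b -> False.
Proof. by rewrite addnS ltnNge leq_addl. Qed.
Lemma no_le2 a b : a + b.+1 <= a -> False.
Proof. by rewrite addnS ltnNge leq_addr. Qed.

Lemma G2E (T : finType) (g : rel T) li mi lj mj x y :
  del_edge (del_edge g li mi) lj mj x y =
  [&& g x y, [set x; y] != [set li; mi] & [set x; y] != [set lj; mj]].
Proof. by rewrite !del_edgeE andbA. Qed.

Lemma in_set_l (T : finType) (a b c d : T) : [set a; b] = [set c; d] -> c \in [set a; b].
Proof. by move=> ->; rewrite set21. Qed.
Lemma in_set_r (T : finType) (a b c d : T) : [set a; b] = [set c; d] -> d \in [set a; b].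
Proof. by move=> ->; rewrite set22. Qed.

Lemma conn_pair (T : finType) (h : rel T) a b c d :
  symmetric h -> [set a; b] = [set c; d] -> connect h c d -> connect h a b.
Proof.
move=> hs /set2_eq [[-> ->]|[-> ->]] // H.
by rewrite (sym_connect_sym hs).
Qed.

Lemma core (T : finType) (g : rel T) (c : seq T) li mi lj mj u u' v v' p k :
  unicyclic g -> is_cycle g c -> odd (size c) ->
  on_cycle c li mi -> on_cycle c lj mj -> g li mi -> g lj mj ->
  [set li; mi] != [set lj; mj] ->
  [set li; mi] = [set u; u'] -> [set lj; mj] = [set v; v'] ->
  path g u p -> last u p = v -> size p = dist_ee g li mi lj mj ->
  odd (dist_ev g li mi k + dist_ev g lj mj k) =
  odd (dist_ee g li mi lj mj) (+) ~~ in_comp (del_edge (del_edge g li mi) lj mj) (u :: p) k.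
Proof.
case=> hs hirr hc hcard hcy hodd hi hj gi gj hneq eu ev hp hl hsz.
set G2 := del_edge (del_edge g li mi) lj mj.
set Ti := del_edge g li mi.
set Tj := del_edge g lj mj.
have hG2s : symmetric G2 := del_sym _ _ (del_sym _ _ hs).
have hpG2 : path G2 u p.
  apply/negPn/negP => /(badstep hp) [q1 [z [q2 [e hn]]]].
  move: hp hl hsz; rewrite e cat_path last_cat /= => /andP [hq1 /andP [hwz hq2]] hl hsz.
  move: hn; rewrite /G2 G2E hwz /= negb_and !negbK => /orP [] /eqP hset.
    have hz : z \in [set li; mi] by rewrite -hset set22.
    have := leq_trans (Dij_le g (y := v) hz (in_set_l ev)) (dist_le' hq2 hl).
    by rewrite -hsz size_cat /=; apply: no_le1.
  have hw : last u q1 \in [set lj; mj] by rewrite -hset set21.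
  have := leq_trans (Dij_le g (in_set_l eu) hw) (dist_le hq1).
  by rewrite -hsz size_cat /=; apply: no_le2.
have hS : in_comp G2 (u :: p) k = connect G2 u k.
  apply/hasP/idP => [[w hw hwk]|huk]; last by exists u; rewrite ?mem_head.
  exact: connect_trans (path_connect hpG2 hw) hwk.
rewrite hS.
have hTjc : conn Tj := conn_del hs hc (cyc_conn hs hcy hj).
have hTic : conn Ti := conn_del hs hc (cyc_conn hs hcy hi).
have heg : [set lj; mj] \in edges g := mem_edges gj.
have heg2 : [set li; mi] \in edges g :\ [set lj; mj] by rewrite in_setD1 hneq mem_edges.
have hETj : #|edges Tj| = #|T|.-1 by rewrite /Tj edges_del -hcard (cardsD1 [set lj; mj] (edges g)) heg.
have hEG2 : (#|edges G2|).+2 = #|T|.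
  rewrite /G2 edges_del edges_del -hcard (cardsD1 [set li; mi] (edges g)) (mem_edges gi).
  by rewrite (cardsD1 [set lj; mj] (edges g :\ _)) in_setD1 eq_sym hneq heg.
set col := fun x => odd (dist Tj x u).
have hcol : forall x y, Tj x y -> col x != col y.
  by move=> x y; apply: level hTjc _; rewrite hETj.
have hvv : col v = col v'.
  apply/eqP/negPn/negP => hn.
  have hall : forall a b, g a b -> col a != col b.
    move=> a b hab; case hT : (Tj a b); first exact: hcol.
    have := not_del hab (negbT hT); rewrite ev => /set2_eq [[-> ->]|[-> ->]] //.
    by rewrite eq_sym.
  by move: hodd; case/and3P: hcy => _ hcyc _; rewrite (negbTE (cycle_even hall hcyc)).
set S := connect G2 u.
have hSv : S v by rewrite /S -hl; apply: (path_connect hpG2); apply: mem_last.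
have hcontra : connect G2 u u' -> connect G2 v v' -> False.
  move=> h1 h2.
  have hG2c : conn G2.
    move=> x y; apply: (connect_sub _ (hc x y)) => a b hab.
    case hd : (G2 a b); first exact: connect1.
    move: hd; rewrite /G2 G2E hab /= => /negbT; rewrite negb_and !negbK => /orP [] /eqP e.
      by apply: conn_pair hG2s (etrans e eu) h1.
    by apply: conn_pair hG2s (etrans e ev) h2.
  have := count_edges u hG2c; rewrite -hEG2 /=.
  by rewrite ltnn.
have hij : connect G2 u u' -> connect G2 v v'.
  move=> h1; apply: (conn_pair hG2s (esym ev)).
  apply: (connect_sub _ (cyc_conn hs hcy hj)) => a b hab.
  case hd : (G2 a b); first exact: connect1.
  move: hd hab; rewrite /G2 G2E /Tj del_edgeE => /negbT hd /andP [hab hn].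
  move: hd; rewrite hab hn /= andbT negbK => /eqP e.
  by apply: conn_pair hG2s (etrans e eu) h1.
have hji : connect G2 v v' -> connect G2 u u'.
  move=> h1; apply: (conn_pair hG2s (esym eu)).
  apply: (connect_sub _ (cyc_conn hs hcy hi)) => a b hab.
  case hd : (G2 a b); first exact: connect1.
  move: hd hab; rewrite /G2 G2E /Ti del_edgeE => /negbT hd /andP [hab hn].
  move: hd; rewrite hab hn /= negbK => /eqP e.
  by apply: conn_pair hG2s (etrans e ev) h1.
have hSu' : ~~ S u' by apply/negP => h; apply: hcontra h (hij h).
have hSv' : ~~ S v'.
  apply/negP => h; have h2 : connect G2 v v'.
    by apply: connect_trans h; rewrite (sym_connect_sym hG2s).
  by apply: hcontra (hji h2) h2.
set pi := fun x => col x (+) ~~ S x.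
have hSc : forall x y, G2 x y -> S x = S y.
  move=> x y hxy; apply/idP/idP => h; first by apply: connect_trans h (connect1 hxy).
  by apply: connect_trans h (connect1 _); rewrite hG2s.
have hG2Tj : forall x y, G2 x y -> Tj x y.
  by move=> x y; rewrite /G2 G2E /Tj del_edgeE => /and3P [-> _ ->].
have hpi : forall x y, del_edge g u u' x y -> pi x != pi y.
  move=> x y; rewrite -(del_set _ _ _ eu) => hxy.
  case hd : (G2 x y).
    rewrite /pi (hSc _ _ hd); move: (hcol _ _ (hG2Tj _ _ hd)).
    by case: (col x); case: (col y); case: (S y).
  move: hd hxy; rewrite /G2 G2E => /negbT; rewrite del_edgeE => hd /andP [hxy hn].
  move: hd; rewrite hxy hn /= negbK => /eqP e.
  rewrite ev in e; case/set2_eq: e => [[-> ->]|[-> ->]]; rewrite /pi hvv hSv (negbTE hSv');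
    by case: (col v').
have hpiu : pi u = pi u'.
  have guu : g u u' by move: eu => /set2_eq [[<- <-]|[<- <-]] //; rewrite hs.
  have hT : Tj u u' by rewrite /Tj del_edgeE guu /= -eu.
  have := hcol _ _ hT; rewrite /pi (negbTE hSu') /S connect0.
  by case: (col u); case: (col u').
have hDi : odd (dist_ev g li mi k) = pi k (+) pi u.
  by rewrite (ev_set _ k eu); apply: near hc hpi hpiu.
have hDj : odd (dist_ev g lj mj k) = col k (+) col v.
  rewrite (ev_set _ k ev); apply: near hc _ hvv => x y.
  by rewrite -(del_set _ _ _ ev); apply: hcol.
have hDij : odd (dist_ee g li mi lj mj) = col u (+) col v.
  rewrite -hsz; have := path_par hcol (sub_path hG2Tj hpG2); rewrite hl => ->.
  by case: (col u); case: odd.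
rewrite oddD hDi hDj hDij /pi /S connect0 /=.
by case: (col k); case: (connect G2 u k); case: (col u); case: (col v).
Qed.

Lemma pair_of (T : finType) (a b x : T) : x \in [:: a; b] -> exists y, [set a; b] = [set x; y].
Proof.
rewrite !inE => /orP [/eqP ->|/eqP ->]; first by exists b.
by exists a; rewrite setUC.
Qed.

Theorem mainTheorem12 (T : finType) (g : rel T) (c : seq T)
  (hG : unicyclic g) (hc : is_cycle g c) (hodd : odd (size c))
  (li mi lj mj k : T) (hi : g li mi) (hj : g lj mj)
  (hneq : [set li; mi] != [set lj; mj]) :
  let Di := dist_ev g li mi k in
  let Dj := dist_ev g lj mj k in
  let Dij := dist_ee g li mi lj mj in
  let G2 := del_edge (del_edge g li mi) lj mj in
  [/\
   (* (a) *)
   (on_cycle c li mi -> on_cycle c lj mj ->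
    forall (u : T) (p : seq T), u \in [:: li; mi] -> path g u p ->
      last u p \in [:: lj; mj] -> size p = Dij ->
      in_comp G2 (u :: p) k -> odd (Di + Dj) = odd Dij),
   (* (b) *)
   (on_cycle c li mi -> on_cycle c lj mj ->
    forall (u : T) (p : seq T), u \in [:: li; mi] -> path g u p ->
      last u p \in [:: lj; mj] -> size p = Dij ->
      ~~ in_comp G2 (u :: p) k -> odd (Di + Dj) != odd Dij),
   (* (c) *)
   (~~ on_cycle c li mi -> ~~ on_cycle c lj mj ->
      ~~ in_comp (del_edge g li mi) c k -> ~~ in_comp (del_edge g lj mj) c k ->
      odd (Di + Dj) != odd Dij)
  & (* (d) *)
   (on_cycle c li mi -> ~~ on_cycle c lj mj ->
      ~~ in_comp (del_edge g lj mj) c k -> odd (Di + Dj) != odd Dij)].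
Proof.
move=> Di Dj Dij G2; rewrite /Di /Dj /Dij /G2 {Di Dj Dij G2}.
have [hs _ hcon _] := hG.
have [c0 hc0] : exists c0, c0 \in c.
  by case: c hc {hodd} => [|x s]; [case/and3P | exists x; rewrite mem_head].
split.
- move=> hci hcj u p hu hp hl hsz hin.
  have [u' eu] := pair_of hu; have [v' ev] := pair_of hl.
  by rewrite (core k hG hc hodd hci hcj hi hj hneq eu ev hp erefl hsz) hin addbF.
- move=> hci hcj u p hu hp hl hsz hin.
  have [u' eu] := pair_of hu; have [v' ev] := pair_of hl.
  by rewrite (core k hG hc hodd hci hcj hi hj hneq eu ev hp erefl hsz) hin; case: odd.
- by move=> _ _; apply: part_c hs hcon hc0 hneq.
- move=> /andP [hli H] _ hk; apply: (part_d hs hcon hli _ hk).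
  by case/orP: H => /eqP <-; rewrite ?mem_next ?mem_prev.
Qed.
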